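(* Let $U$ be a finite-dimensional real vector space and $\lambda\colon U_{\mathbb C}\to\mathbb C$ a polynomial function. For every entire function $\Psi\colon\mathbb C\to\mathbb C$ of finite order, there exists a holomorphic function $\nu$ on $U_{\mathbb C}$ with moderate vertical growth whose zero set is exactly $\lambda^{-1}(\{z\in\mathbb C:\Psi(z)=0\})$.
   Context: The order of an entire function $\Psi$ is the infimum of $e\ge0$ such that $|\Psi(z)|<C_e\exp(|z|^e)$ for all $z$ and some $C_e>0$. A holomorphic $\nu$ on $U_{\mathbb C}$ has moderate vertical growth if for every $M>0$ there is $r_M\in\mathbb R$ with $\sup_{\|\mathrm{Re}\,z\|<M}|\nu(z)|(1+\|z\|)^{r_M}<\infty$ for a Euclidean norm $\|\cdot\|$ on $U_{\mathbb C}$ (here $\mathrm{Re}\colon U_{\mathbb C}\to U$ is the real part). *)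

(* Defs.v *)
From Stdlib Require Import Reals.
From mathcomp Require Import ssreflect ssrfun ssrbool eqtype ssrnat fintype bigop.
Open Scope R_scope.


Record CC := mkC { Cre : R ; Cim : R }.

Definition C0 : CC := mkC 0 0.
Definition Cadd (z w : CC) : CC := mkC (Cre z + Cre w) (Cim z + Cim w).
Definition Copp (z : CC) : CC := mkC (- Cre z) (- Cim z).
Definition Csub (z w : CC) : CC := Cadd z (Copp w).
Definition Cmul (z w : CC) : CC :=
  mkC (Cre z * Cre w - Cim z * Cim w) (Cre z * Cim w + Cim z * Cre w).
Definition Cnorm (z : CC) : R := sqrt (Cre z * Cre z + Cim z * Cim z).

(* ---------- U = R^n, U_C = CC^n ---------- *)
Definition CVec (n : nat) := 'I_n -> CC.

Definition vadd {n} (z w : CVec n) : CVec n := fun i => Cadd (z i) (w i).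
Definition vnorm {n} (z : CVec n) : R :=
  sqrt (\big[Rplus/0]_(i < n) (Cnorm (z i) * Cnorm (z i))).
Definition renorm {n} (z : CVec n) : R :=
  sqrt (\big[Rplus/0]_(i < n) (Cre (z i) * Cre (z i))).

(* x^e for x >= 0 and real e >= 0, with the convention 0^0 = 1, 0^e = 0 (e>0) *)
Definition rpow (x e : R) : R :=
  if Req_EM_T x 0 then (if Req_EM_T e 0 then 1 else 0) else Rpower x e.

Definition entire (f : CC -> CC) : Prop :=
  forall z : CC, exists a : CC, forall eps : R, eps > 0 ->
    exists delta : R, delta > 0 /\
      forall h : CC, 0 < Cnorm h < delta ->
        Cnorm (Csub (Csub (f (Cadd z h)) (f z)) (Cmul a h)) <= eps * Cnorm h.

Definition holomorphic {n} (f : CVec n -> CC) : Prop :=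
  forall z : CVec n, exists a : CVec n, forall eps : R, eps > 0 ->
    exists delta : R, delta > 0 /\
      forall h : CVec n, 0 < vnorm h < delta ->
        Cnorm (Csub (Csub (f (vadd z h)) (f z))
                    (\big[Cadd/C0]_(i < n) Cmul (a i) (h i)))
          <= eps * vnorm h.

(* Psi has finite order: the set of e >= 0 with |Psi z| < C_e exp(|z|^e)
   for all z (some C_e > 0) is nonempty, i.e. its infimum is finite. *)
Definition finite_order (Psi : CC -> CC) : Prop :=
  exists e : R, e >= 0 /\ exists Ce : R, Ce > 0 /\
    forall z : CC, Cnorm (Psi z) < Ce * exp (rpow (Cnorm z) e).

Inductive poly_fun {n : nat} : (CVec n -> CC) -> Prop :=
  | pf_const (c : CC) : poly_fun (fun _ => c)
  | pf_coord (i : 'I_n) : poly_fun (fun z => z i)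
  | pf_add (p q : CVec n -> CC) :
      poly_fun p -> poly_fun q -> poly_fun (fun z => Cadd (p z) (q z))
  | pf_mul (p q : CVec n -> CC) :
      poly_fun p -> poly_fun q -> poly_fun (fun z => Cmul (p z) (q z)).

Definition moderate_vertical_growth {n} (nu : CVec n -> CC) : Prop :=
  forall M : R, M > 0 -> exists rM : R, exists B : R,
    forall z : CVec n, renorm z < M ->
      Cnorm (nu z) * Rpower (1 + vnorm z) rM <= B.

(* Main.v *)
From HB Require Import structures.
Require Import Defs.
From mathcomp Require Import ssreflect ssrfun ssrbool eqtype ssrnat fintype bigop.
From Stdlib Require Import ZArith Reals Lra Psatz.
Open Scope R_scope.
Set Warnings "-notation-overridden".

Lemma CC_ext (z w : CC) : Cre z = Cre w -> Cim z = Cim w -> z = w.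
Proof. by case: z => a b; case: w => c d /= -> ->. Qed.
Ltac Ceq := apply CC_ext; simpl; ring.

Lemma CaddA : associative Cadd. Proof. move=> x y z; Ceq. Qed.
Lemma CaddC : commutative Cadd. Proof. move=> x y; Ceq. Qed.
Lemma Cadd0l : left_id C0 Cadd. Proof. move=> x; Ceq. Qed.
HB.instance Definition _ := Monoid.isComLaw.Build CC C0 Cadd CaddA CaddC Cadd0l.
Lemma RplusA : associative Rplus. Proof. move=> x y z; ring. Qed.
Lemma RplusC : commutative Rplus. Proof. move=> x y; ring. Qed.
Lemma Rplus0l : left_id 0 Rplus. Proof. move=> x; ring. Qed.
HB.instance Definition _ := Monoid.isComLaw.Build R 0 Rplus RplusA RplusC Rplus0l.

Lemma Cnorm_ge0 z : 0 <= Cnorm z. Proof. exact: sqrt_pos. Qed.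
Lemma Cnorm_sq z : Cnorm z * Cnorm z = Cre z * Cre z + Cim z * Cim z.
Proof. rewrite /Cnorm sqrt_sqrt //; nra. Qed.
Lemma Cnorm_mul z w : Cnorm (Cmul z w) = Cnorm z * Cnorm w.
Proof.
rewrite /Cnorm -sqrt_mult; try nra. f_equal; simpl; ring.
Qed.
Lemma sqrt_le_abs x y : x * x <= y -> x <= sqrt y.
Proof.
move=> h. have hy : 0 <= y by nra.
case: (Rle_lt_dec x 0) => hx; first by have := sqrt_pos y; lra.
rewrite -(sqrt_square x); last lra. apply: sqrt_le_1_alt. lra.
Qed.
Lemma Cnorm_add z w : Cnorm (Cadd z w) <= Cnorm z + Cnorm w.
Proof.
case: z => a b; case: w => c d; rewrite /Cnorm /=.
set P := a*a+b*b. set Q := c*c+d*d.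
have hP : 0 <= P by rewrite /P; nra. have hQ : 0 <= Q by rewrite /Q; nra.
have hs : a*c+b*d <= sqrt P * sqrt Q.
  rewrite -sqrt_mult //. apply: sqrt_le_abs. rewrite /P /Q. have := Rle_0_sqr (a*d-b*c). rewrite /Rsqr. nra.
have h1 := sqrt_sqrt P hP. have h2 := sqrt_sqrt Q hQ.
have q1 := sqrt_pos P. have q2 := sqrt_pos Q.
rewrite -(sqrt_square (sqrt P + sqrt Q)); last lra.
apply: sqrt_le_1_alt. rewrite /P /Q in h1 h2 hs *. nra.
Qed.
Lemma Cnorm_opp z : Cnorm (Copp z) = Cnorm z.
Proof. rewrite /Cnorm /=; f_equal; ring. Qed.
Lemma Cnorm_sub z w : Cnorm (Csub z w) <= Cnorm z + Cnorm w.
Proof. rewrite /Csub -(Cnorm_opp w); exact: Cnorm_add. Qed.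
Lemma Cnorm0 : Cnorm C0 = 0.
Proof. by rewrite /Cnorm /= Rmult_0_l Rplus_0_l sqrt_0. Qed.
Lemma Cnorm_eq0 z : Cnorm z = 0 -> z = C0.
Proof.
move=> h. have := Cnorm_sq z. rewrite h => e.
apply: CC_ext => /=; nra.
Qed.
Lemma Cre_le z : Rabs (Cre z) <= Cnorm z.
Proof. rewrite -sqrt_Rsqr_abs; apply: sqrt_le_1_alt; rewrite /Rsqr; nra. Qed.
Lemma Cim_le z : Rabs (Cim z) <= Cnorm z.
Proof. rewrite -sqrt_Rsqr_abs; apply: sqrt_le_1_alt; rewrite /Rsqr; nra. Qed.
Lemma Cnorm_le_reim z : Cnorm z <= Rabs (Cre z) + Rabs (Cim z).
Proof.
have h1 := Rabs_pos (Cre z); have h2 := Rabs_pos (Cim z).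
rewrite -(sqrt_square (Rabs (Cre z) + Rabs (Cim z))); last lra.
apply: sqrt_le_1_alt.
have e1 : Cre z * Cre z = Rabs (Cre z) * Rabs (Cre z) by rewrite -Rabs_mult Rabs_right; nra.
have e2 : Cim z * Cim z = Rabs (Cim z) * Rabs (Cim z) by rewrite -Rabs_mult Rabs_right; nra.
nra.
Qed.

Section Sums.
Variable n : nat.
Implicit Types (F G : 'I_n -> R).

Lemma sumR_le F G : (forall i, F i <= G i) ->
  \big[Rplus/0]_(i<n) F i <= \big[Rplus/0]_(i<n) G i.
Proof. move=> h; apply: (big_ind2 Rle); [lra | move=> *; lra | move=> i _; exact: h]. Qed.
Lemma sumR_ge0 F : (forall i, 0 <= F i) -> 0 <= \big[Rplus/0]_(i<n) F i.
Proof. move=> h; apply: (big_ind (Rle 0)); [lra | move=> *; lra | move=> i _; exact: h]. Qed.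
Lemma sumR_abs F : Rabs (\big[Rplus/0]_(i<n) F i) <= \big[Rplus/0]_(i<n) Rabs (F i).
Proof.
apply: (big_ind2 (fun x y => Rabs x <= y)); first by rewrite Rabs_R0; lra.
  move=> x1 x2 y1 y2 h1 h2. have := Rabs_triang x1 y1. lra.
by move=> i _; lra.
Qed.
Lemma sumR_scal c F : \big[Rplus/0]_(i<n) (c * F i) = c * \big[Rplus/0]_(i<n) F i.
Proof.
apply: (big_rec2 (fun x y => x = c * y)); first ring.
by move=> i x y _ ->; ring.
Qed.
Lemma sumR_add F G : \big[Rplus/0]_(i<n) (F i + G i) =
  \big[Rplus/0]_(i<n) F i + \big[Rplus/0]_(i<n) G i.
Proof. by rewrite big_split. Qed.
Lemma Cnorm_sum (H : 'I_n -> CC) :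
  Cnorm (\big[Cadd/C0]_(i<n) H i) <= \big[Rplus/0]_(i<n) Cnorm (H i).
Proof.
apply: (big_ind2 (fun x y => Cnorm x <= y)); first by rewrite Cnorm0; lra.
  move=> x1 x2 y1 y2 h1 h2. have := Cnorm_add x1 y1. lra.
by move=> i _; lra.
Qed.
Lemma Cre_sum (H : 'I_n -> CC) :
  Cre (\big[Cadd/C0]_(i<n) H i) = \big[Rplus/0]_(i<n) Cre (H i).
Proof. by apply: (big_morph Cre). Qed.
Lemma Cim_sum (H : 'I_n -> CC) :
  Cim (\big[Cadd/C0]_(i<n) H i) = \big[Rplus/0]_(i<n) Cim (H i).
Proof. by apply: (big_morph Cim). Qed.
Lemma Cmul_sum p (H : 'I_n -> CC) :
  Cmul p (\big[Cadd/C0]_(i<n) H i) = \big[Cadd/C0]_(i<n) Cmul p (H i).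
Proof. apply: (big_morph (Cmul p)) => [x y|]; Ceq. Qed.

Lemma coord_le (h : CVec n) i : Cnorm (h i) <= vnorm h.
Proof.
rewrite /vnorm. rewrite -(sqrt_square (Cnorm (h i))); last exact: Cnorm_ge0.
apply: sqrt_le_1_alt. rewrite (bigD1 i) //=.
have := sumR_ge0 (fun j => if j != i then Cnorm (h j) * Cnorm (h j) else 0).
rewrite -big_mkcond /=. move=> H.
have : 0 <= \big[Rplus/0]_(j < n | j != i) (Cnorm (h j) * Cnorm (h j)).
  apply: H => j. case: (j != i) => //; last lra. have := Cnorm_ge0 (h j); nra.
move=> Hs. rewrite -{1}(Rplus_0_r (Cnorm (h i) * _)). apply: Rplus_le_compat_l. exact: Hs.
Qed.

Definition lin (a h : CVec n) := \big[Cadd/C0]_(i<n) Cmul (a i) (h i).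
Definition anorm (a : CVec n) := \big[Rplus/0]_(i<n) Cnorm (a i).
Lemma anorm_ge0 a : 0 <= anorm a.
Proof. apply: sumR_ge0 => i; exact: Cnorm_ge0. Qed.
Lemma lin_bound a h : Cnorm (lin a h) <= anorm a * vnorm h.
Proof.
apply: Rle_trans (Cnorm_sum _) _. rewrite /anorm Rmult_comm -sumR_scal.
apply: sumR_le => i. rewrite Cnorm_mul Rmult_comm.
apply: Rmult_le_compat_r; [exact: Cnorm_ge0 | exact: coord_le].
Qed.
Lemma lin_comb p q a b h :
  lin (fun i => Cadd (Cmul p (a i)) (Cmul q (b i))) h =
  Cadd (Cmul p (lin a h)) (Cmul q (lin b h)).
Proof.
rewrite /lin !Cmul_sum -big_split /=. apply: eq_bigr => i _. Ceq.
Qed.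
Lemma vnorm_ge0 (h : CVec n) : 0 <= vnorm h. Proof. exact: sqrt_pos. Qed.


Definition oh (r : CVec n -> CC) := forall eps, eps > 0 -> exists delta, delta > 0 /\
  forall h : CVec n, 0 < vnorm h < delta -> Cnorm (r h) <= eps * vnorm h.
Definition Oh (r : CVec n -> CC) := exists C delta, 0 <= C /\ delta > 0 /\
  forall h : CVec n, 0 < vnorm h < delta -> Cnorm (r h) <= C * vnorm h.
Definition o1 (r : CVec n -> CC) := forall eps, eps > 0 -> exists delta, delta > 0 /\
  forall h : CVec n, 0 < vnorm h < delta -> Cnorm (r h) <= eps.

Lemma oh_ext r1 r2 : (forall h, 0 < vnorm h -> r1 h = r2 h) -> oh r1 -> oh r2.
Proof.
move=> e H eps he; have [d [hd Hd]] := H eps he; exists d; split => // h hh.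
rewrite -e; [exact: Hd | lra].
Qed.
Lemma Oh_ext r1 r2 : (forall h, 0 < vnorm h -> r1 h = r2 h) -> Oh r1 -> Oh r2.
Proof.
move=> e [C [d [hC [hd Hd]]]]; exists C, d; do 2 split => //; move=> h hh.
rewrite -e; [exact: Hd | lra].
Qed.
Lemma oh_add r1 r2 : oh r1 -> oh r2 -> oh (fun h => Cadd (r1 h) (r2 h)).
Proof.
move=> H1 H2 eps he.
have [d1 [hd1 Hd1]] := H1 (eps/2) ltac:(lra).
have [d2 [hd2 Hd2]] := H2 (eps/2) ltac:(lra).
exists (Rmin d1 d2); split; first by apply: Rmin_pos.
move=> h hh. have := Rmin_l d1 d2; have := Rmin_r d1 d2 => m2 m1.
apply: Rle_trans (Cnorm_add _ _) _.
have := Hd1 h ltac:(lra); have := Hd2 h ltac:(lra). lra.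
Qed.
Lemma oh_scal c r : oh r -> oh (fun h => Cmul c (r h)).
Proof.
move=> H eps he. have hc := Cnorm_ge0 c.
have [d [hd Hd]] := H (eps / (Cnorm c + 1)) ltac:(apply: Rdiv_lt_0_compat; lra).
exists d; split => // h hh. rewrite Cnorm_mul.
have := Hd h hh => H1. have hv := vnorm_ge0 h.
apply: Rle_trans (Rmult_le_compat_l _ _ _ hc H1) _.
set t := eps / (Cnorm c + 1).
have et : eps = (Cnorm c + 1) * t by rewrite /t; field; lra.
have ? : 0 <= t * vnorm h.
  apply: Rmult_le_pos => //; apply: Rlt_le; apply: Rdiv_lt_0_compat; lra.
rewrite et; nra.
Qed.
Lemma Oh_lin a : Oh (lin a).
Proof.
exists (anorm a), 1; split; first exact: anorm_ge0. split; first lra.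
move=> h _; exact: lin_bound.
Qed.
Lemma oh_Oh r : oh r -> Oh r.
Proof.
move=> H; have [d [hd Hd]] := H 1 ltac:(lra); exists 1, d.
split; first lra. split => //.
Qed.
Lemma Oh_add r1 r2 : Oh r1 -> Oh r2 -> Oh (fun h => Cadd (r1 h) (r2 h)).
Proof.
move=> [C1 [d1 [hC1 [hd1 Hd1]]]] [C2 [d2 [hC2 [hd2 Hd2]]]].
exists (C1 + C2), (Rmin d1 d2); split; first lra. split; first by apply: Rmin_pos.
move=> h hh. have := Rmin_l d1 d2; have := Rmin_r d1 d2 => m2 m1.
apply: Rle_trans (Cnorm_add _ _) _.
have := Hd1 h ltac:(lra); have := Hd2 h ltac:(lra). lra.
Qed.
Lemma Oh_o1 r : Oh r -> o1 r.
Proof.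
move=> [C [d [hC [hd Hd]]]] eps he.
exists (Rmin d (eps / (C + 1))); split.
  apply: Rmin_pos => //; apply: Rdiv_lt_0_compat; lra.
move=> h hh. have := Rmin_l d (eps / (C + 1)); have := Rmin_r d (eps / (C + 1)) => m2 m1.
apply: Rle_trans (Hd h ltac:(lra)) _.
have ? : vnorm h * (C + 1) <= eps.
  have -> : eps = eps / (C+1) * (C + 1) by field; lra.
  apply: Rmult_le_compat_r; lra.
nra.
Qed.
Lemma oh_mul p q : Oh p -> o1 q -> oh (fun h => Cmul (p h) (q h)).
Proof.
move=> [C [d [hC [hd Hd]]]] Hq eps he.
have [d2 [hd2 Hd2]] := Hq (eps / (C + 1)) ltac:(apply: Rdiv_lt_0_compat; lra).
exists (Rmin d d2); split; first by apply: Rmin_pos.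
move=> h hh. have := Rmin_l d d2; have := Rmin_r d d2 => m2 m1.
rewrite Cnorm_mul. have H1 := Hd h ltac:(lra). have H2 := Hd2 h ltac:(lra).
have hp := Cnorm_ge0 (p h). have hqq := Cnorm_ge0 (q h). have hv := vnorm_ge0 h.
apply: Rle_trans (Rmult_le_compat _ _ _ _ hp hqq H1 H2) _.
have e : C * vnorm h * (eps / (C + 1)) = (C / (C+1)) * eps * vnorm h by field; lra.
rewrite e. have Ht : C / (C + 1) <= 1.
  apply: (Rmult_le_reg_r (C+1)); first lra. field_simplify; lra.
apply: Rmult_le_compat_r => //. set t := C / (C+1) in Ht *. nra.
Qed.

Arguments oh_ext {r1 r2}. Arguments Oh_ext {r1 r2}. Arguments oh_add {r1 r2}.
Arguments Oh_add {r1 r2}. Arguments oh_scal c {r}. Arguments oh_Oh {r}.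
Arguments Oh_o1 {r}. Arguments oh_mul {p q}.
Definition C1 := mkC 1 0.
Definition rem (f : CVec n -> CC) z a := fun h => Csub (Csub (f (vadd z h)) (f z)) (lin a h).
Lemma holoP f : (forall z, exists a, oh (rem f z a)) -> @holomorphic n f.
Proof. move=> H z; exact: H z. Qed.
Lemma holoP' f : @holomorphic n f -> forall z, exists a, oh (rem f z a).
Proof. move=> H z; exact: H z. Qed.
Lemma lin_scal b a h : lin (fun i => Cmul b (a i)) h = Cmul b (lin a h).
Proof. by rewrite /lin Cmul_sum; apply: eq_bigr => i _; Ceq. Qed.
Lemma oh_zero : oh (fun _ => C0).
Proof.
move=> eps he; exists 1; split; first lra. move=> h hh; rewrite Cnorm0.
have := vnorm_ge0 h; nra.
Qed.
Lemma holo_const c : holomorphic (fun _ : CVec n => c).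
Proof.
apply: holoP => z; exists (fun _ => C0).
apply: oh_ext oh_zero => h _. rewrite /rem /lin big1 => [|i _]; Ceq.
Qed.
Lemma holo_coord i : holomorphic (fun z : CVec n => z i).
Proof.
apply: holoP => z; exists (fun j => if j == i then C1 else C0).
apply: oh_ext oh_zero => h _. rewrite /rem /lin (bigD1 i) //= eqxx big1.
  rewrite /vadd; Ceq.
by move=> j /negbTE ->; Ceq.
Qed.
Lemma holo_add (f g : CVec n -> CC) : holomorphic f -> holomorphic g ->
  holomorphic (fun z => Cadd (f z) (g z)).
Proof.
move=> Hf Hg; apply: holoP => z.
have [af Haf] := holoP' _ Hf z. have [ag Hag] := holoP' _ Hg z.
exists (fun i => Cadd (Cmul C1 (af i)) (Cmul C1 (ag i))).
apply: oh_ext (oh_add Haf Hag) => h _. rewrite /rem lin_comb; Ceq.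
Qed.
Lemma holo_mul (f g : CVec n -> CC) : holomorphic f -> holomorphic g ->
  holomorphic (fun z => Cmul (f z) (g z)).
Proof.
move=> Hf Hg; apply: holoP => z.
have [af Haf] := holoP' _ Hf z. have [ag Hag] := holoP' _ Hg z.
exists (fun i => Cadd (Cmul (f z) (ag i)) (Cmul (g z) (af i))).
have OF : Oh (fun h => Csub (f (vadd z h)) (f z)).
  apply: Oh_ext (Oh_add (Oh_lin af) (oh_Oh Haf)) => h _; rewrite /rem; Ceq.
have OG : Oh (fun h => Csub (g (vadd z h)) (g z)).
  apply: Oh_ext (Oh_add (Oh_lin ag) (oh_Oh Hag)) => h _; rewrite /rem; Ceq.
apply: oh_ext (oh_add (oh_add (oh_scal (f z) Hag) (oh_scal (g z) Haf))
                     (oh_mul OF (Oh_o1 OG))) => h _.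
rewrite /rem lin_comb; Ceq.
Qed.

Lemma holo_comp (g : CC -> CC) (f : CVec n -> CC) : entire g -> holomorphic f ->
  holomorphic (fun z => g (f z)).
Proof.
move=> Hg Hf; apply: holoP => z.
have [af Haf] := holoP' _ Hf z.
have [b Hb] := Hg (f z).
exists (fun i => Cmul b (af i)).
set F := fun h => Csub (f (vadd z h)) (f z).
set rg := fun k => Csub (Csub (g (Cadd (f z) k)) (g (f z))) (Cmul b k).
have OF : Oh F.
  apply: Oh_ext (Oh_add (Oh_lin af) (oh_Oh Haf)) => h _; rewrite /rem /F; Ceq.
have Hrg : oh (fun h => rg (F h)).
  move=> eps he.
  have [C [d1 [hC [hd1 Hd1]]]] := OF.
  have [dg [hdg Hdg]] := Hb (eps / (C + 1)) ltac:(apply: Rdiv_lt_0_compat; lra).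
  have [d2 [hd2 Hd2]] := Oh_o1 OF (dg/2) ltac:(lra).
  exists (Rmin d1 d2); split; first by apply: Rmin_pos.
  move=> h hh. have := Rmin_l d1 d2; have := Rmin_r d1 d2 => m2 m1.
  have H1 := Hd1 h ltac:(lra). have H2 := Hd2 h ltac:(lra).
  have hv := vnorm_ge0 h. have hF := Cnorm_ge0 (F h).
  case: (Req_dec (Cnorm (F h)) 0) => e0.
    have -> : F h = C0 by exact: Cnorm_eq0.
    have -> : rg C0 = C0.
      rewrite /rg (_ : Cadd (f z) C0 = (f z)); last by Ceq.
      Ceq.
    rewrite Cnorm0; nra.
  have H3 := Hdg (F h) ltac:(lra).
  apply: Rle_trans H3 _.
  set t := eps / (C + 1).
  have et : eps = (C + 1) * t by rewrite /t; field; lra.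
  have ht : 0 < t by rewrite /t; apply: Rdiv_lt_0_compat; lra.
  rewrite et. nra.
apply: oh_ext (oh_add Hrg (oh_scal b Haf)) => h _.
rewrite /rem lin_scal /rg /F.
rewrite (_ : Cadd (f z) (Csub (f (vadd z h)) (f z)) = f (vadd z h)); last by Ceq.
Ceq.
Qed.
End Sums.

Lemma poly_holo n (f : CVec n -> CC) : poly_fun f -> holomorphic f.
Proof.
elim => [c|i|p q _ Hp _ Hq|p q _ Hp _ Hq].
- exact: holo_const.
- exact: holo_coord.
- exact: holo_add.
- exact: holo_mul.
Qed.

Definition Cexp (w : CC) := mkC (exp (Cre w) * cos (Cim w)) (exp (Cre w) * sin (Cim w)).
Lemma Cexp_add w k : Cexp (Cadd w k) = Cmul (Cexp w) (Cexp k).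
Proof. apply: CC_ext; rewrite /= exp_plus ?cos_plus ?sin_plus; ring. Qed.
Lemma Cnorm_Cexp w : Cnorm (Cexp w) = exp (Cre w).
Proof.
rewrite /Cnorm /=. have := sin2_cos2 (Cim w). rewrite /Rsqr => e.
have -> : exp (Cre w) * cos (Cim w) * (exp (Cre w) * cos (Cim w)) +
  exp (Cre w) * sin (Cim w) * (exp (Cre w) * sin (Cim w)) = exp (Cre w) * exp (Cre w).
  transitivity (exp (Cre w) * exp (Cre w) * (sin (Cim w) * sin (Cim w) + cos (Cim w) * cos (Cim w))); first ring.
  rewrite e; ring.
apply: sqrt_square. have := exp_pos (Cre w); lra.
Qed.

Lemma sin_near a : -1/2 <= a <= 1/2 -> Rabs (sin a - a) <= a * a.
Proof.
have key : forall b, 0 <= b <= 1/2 -> 0 <= b - sin b <= b * b.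
  move=> b hb. have := pre_sin_bound b 0 ltac:(lra) ltac:(lra).
  rewrite /sin_approx /sin_term /= => [[h1 _]].
  replace (1+1+1+1+1+1) with 6 in h1 by ring.
  case: (Req_dec b 0) => [->|hb0]; first by rewrite sin_0; lra.
  have := sin_lt_x b ltac:(lra). nra.
move=> h. case: (Rle_lt_dec 0 a) => ha.
  have K := key a ltac:(lra). rewrite Rabs_left1; lra.
have K := key (-a) ltac:(lra). rewrite sin_neg in K. rewrite Rabs_right; nra.
Qed.
Lemma cos_near a : -1/2 <= a <= 1/2 -> Rabs (cos a - 1) <= a * a.
Proof.
move=> h. have := pre_cos_bound a 0 ltac:(lra) ltac:(lra).
rewrite /cos_approx /cos_term /= => [[h1 _]].
replace (1+1) with 2 in h1 by ring.
have K := COS_bound a. rewrite Rabs_left1; nra.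
Qed.
Lemma exp_near a : -1/2 <= a <= 1/2 ->
  Rabs (exp a - 1 - a) <= 2 * (a * a) /\ Rabs (exp a - 1) <= 2 * Rabs a /\ exp a <= 2.
Proof.
move=> h. have l1 := exp_ineq1_le a. have l2 := exp_ineq1_le (-a).
have e : exp a * exp (-a) = 1 by rewrite -exp_plus Rplus_opp_r exp_0.
have p1 := exp_pos a. have p2 := exp_pos (-a).
have u : exp a * (1 - a) <= 1 by nra.
split; last split.
- rewrite Rabs_right; last lra. nra.
- case: (Rle_lt_dec 0 a) => ha.
    rewrite Rabs_right; last lra. rewrite Rabs_right; nra.
  rewrite (Rabs_left a) //. case: (Rle_lt_dec 0 (exp a - 1)) => hh.
    rewrite Rabs_right; nra.
  rewrite Rabs_left; nra.
- nra.
Qed.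
Lemma Cexp_small k : Cnorm k <= 1/2 ->
  Cnorm (Csub (Csub (Cexp k) C1) k) <= 4 * (Cnorm k * Cnorm k).
Proof.
case: k => a b /= hk.
have ha := Cre_le (mkC a b). have hb := Cim_le (mkC a b). simpl in ha, hb.
have ha' : -1/2 <= a <= 1/2 by move: (Rle_abs a) (Rle_abs (-a)); rewrite Rabs_Ropp => ? ?; lra.
have hb' : -1/2 <= b <= 1/2 by move: (Rle_abs b) (Rle_abs (-b)); rewrite Rabs_Ropp => ? ?; lra.
have sq := Cnorm_sq (mkC a b). simpl in sq.
apply: Rle_trans (Cnorm_le_reim _) _. rewrite /=.
have [E1 [E2 E3]] := exp_near a ha'. have S := sin_near b hb'. have Co := cos_near b hb'.
have hs := SIN_bound b. have hc := COS_bound b. have pe := exp_pos a.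
have r1 : Rabs (exp a * cos b - 1 - a) <= 2 * (a * a) + 2 * (b * b).
  have -> : exp a * cos b - 1 - a = (exp a - 1 - a) + exp a * (cos b - 1) by ring.
  apply: Rle_trans (Rabs_triang _ _) _. rewrite Rabs_mult (Rabs_right (exp a)); last lra.
  have := Rabs_pos (cos b - 1). nra.
have r2 : Rabs (exp a * sin b - b) <= 2 * Rabs a * Rabs b + b * b.
  have -> : exp a * sin b - b = (exp a - 1) * sin b + (sin b - b) by ring.
  apply: Rle_trans (Rabs_triang _ _) _. rewrite Rabs_mult.
  have : Rabs (sin b) <= Rabs b.
    case: (Rle_lt_dec 0 b) => hb0.
      case: (Req_dec b 0) => [->|hbb]; first by rewrite sin_0; lra.
      have := sin_lt_x b ltac:(lra). have := sin_ge_0 b hb0 ltac:(have := PI2_1; lra).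
      move=> *; rewrite !Rabs_right; lra.
    have := sin_lt_x (-b) ltac:(lra). rewrite sin_neg.
    have := sin_ge_0 (-b) ltac:(lra) ltac:(have := PI2_1; lra). rewrite sin_neg.
    move=> *; rewrite !Rabs_left1; lra.
  have := Rabs_pos (exp a - 1). have := Rabs_pos (sin b). nra.
have ab : 2 * Rabs a * Rabs b <= a * a + b * b.
  have e1 : a * a = Rabs a * Rabs a by rewrite -Rabs_mult Rabs_right; nra.
  have e2 : b * b = Rabs b * Rabs b by rewrite -Rabs_mult Rabs_right; nra.
  have := Rle_0_sqr (Rabs a - Rabs b). rewrite /Rsqr. nra.
have -> : exp a * cos b - 1 + - a = exp a * cos b - 1 - a by ring.
have -> : exp a * sin b + - 0 + - b = exp a * sin b - b by ring.
rewrite sq; nra.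
Qed.

Lemma Cexp_entire : entire Cexp.
Proof.
move=> w; exists (Cexp w) => eps he.
set E := Cnorm (Cexp w). have hE : 0 <= E := Cnorm_ge0 _.
exists (Rmin (1/2) (eps / (4 * E + 1))); split.
  apply: Rmin_pos; first lra. apply: Rdiv_lt_0_compat; lra.
move=> k [hk0 hk]. have := Rmin_l (1/2) (eps / (4 * E + 1)); have := Rmin_r (1/2) (eps / (4 * E + 1)) => m2 m1.
rewrite (_ : Csub (Csub (Cexp (Cadd w k)) (Cexp w)) (Cmul (Cexp w) k) =
   Cmul (Cexp w) (Csub (Csub (Cexp k) C1) k)); last by rewrite Cexp_add; Ceq.
rewrite Cnorm_mul -/E. have S := Cexp_small k ltac:(lra).
have Hr := Cnorm_ge0 (Csub (Csub (Cexp k) C1) k).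
apply: Rle_trans (Rmult_le_compat_l _ _ _ hE S) _.
set t := eps / (4 * E + 1) in m2 hk.
have et : eps = (4 * E + 1) * t by rewrite /t; field; lra.
have hkt : Cnorm k <= t by lra.
have hk1 : Cnorm k * Cnorm k <= t * Cnorm k by have := Cnorm_ge0 k; nra.
have hk2 : E * (Cnorm k * Cnorm k) <= E * (t * Cnorm k) by apply: Rmult_le_compat_l.
have hk3 : 0 <= t * Cnorm k by have := Cnorm_ge0 k; nra.
rewrite et. nra.
Qed.

Lemma pow_sum_le a b D : 0 <= a -> 0 <= b -> (a + b)^D <= 2^D * (a^D + b^D).
Proof.
move=> ha hb. have pa := pow_le a D ha. have pb := pow_le b D hb.
case: (Rle_lt_dec a b) => h.
  have := pow_incr (a + b) (2 * b) D ltac:(lra). rewrite Rpow_mult_distr.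
  have := pow_le 2 D ltac:(lra). nra.
have := pow_incr (a + b) (2 * a) D ltac:(lra). rewrite Rpow_mult_distr.
have := pow_le 2 D ltac:(lra). nra.
Qed.
Lemma pow_le_succ T D : 0 <= T -> T^D <= 1 + T^(D.+1).
Proof.
move=> hT. have := pow_le T D.+1 hT.
case: (Rle_lt_dec T 1) => h.
  have := pow_incr T 1 D ltac:(lra). rewrite pow1. lra.
have : T^D <= T^(D.+1) by apply: Rle_pow; [lra | apply/leP; exact: leqnSn].
lra.
Qed.
Lemma bern k T s : 0 <= s <= T -> T^k * (T - INR k.+1 * s) <= (T - s)^(k.+1).
Proof.
move=> hs. elim: k => [|k IH].
  rewrite /=; lra.
have P := pow_le T k ltac:(lra).
rewrite [(T - s)^(k.+2)]/= -/(pow (T - s) k.+1).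
have h1 : (T - s) * (T^k * (T - INR k.+1 * s)) <= (T - s) * (T - s)^(k.+1).
  apply: Rmult_le_compat_l; lra.
rewrite [T^(k.+1)]/= !S_INR. rewrite S_INR in h1.
have hk := pos_INR k.
have H0 : 0 <= T^k * ((INR k + 1) * (s * s)) by apply: Rmult_le_pos => //; nra.
have eq : T * T^k * (T - (INR k + 1 + 1) * s) =
  (T - s) * (T^k * (T - (INR k + 1) * s)) - T^k * ((INR k + 1) * (s * s)) by ring.
rewrite eq. lra.
Qed.
Lemma pow_upper k T g : 0 < T -> 0 <= g -> INR k.+1 * g <= T / 4 ->
  (T + g)^(k.+1) <= 4/3 * T^(k.+1).
Proof.
move=> hT hg hN. have hk := pos_INR k.+1.
have hk1 : 1 <= INR k.+1 by rewrite S_INR; have := pos_INR k; lra.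
have gT : g <= T / 4 by nra.
have B := bern k T g ltac:(lra).
have e1 : (T + g)^(k.+1) * (T - g)^(k.+1) = (T*T - g*g)^(k.+1) by rewrite -Rpow_mult_distr; f_equal; ring.
have e2 : (T*T - g*g)^(k.+1) <= (T*T)^(k.+1) by apply: pow_incr; nra.
rewrite Rpow_mult_distr in e2.
have hTk : 0 < T^k by apply: pow_lt.
have hTk1 : T^(k.+1) = T * T^k by [].
have l : 3/4 * T^(k.+1) <= (T - g)^(k.+1).
  apply: Rle_trans B. rewrite hTk1. have : T - INR k.+1 * g >= 3/4 * T by lra. nra.
have p1 := pow_le (T + g) k.+1 ltac:(lra).
have hT1 : 0 < T^(k.+1) by apply: pow_lt.
apply: (Rmult_le_reg_r (3/4 * T^(k.+1))); first nra.
apply: Rle_trans (Rmult_le_compat_l _ _ _ p1 l) _. rewrite e1.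
apply: Rle_trans e2 _. nra.
Qed.

Ltac Lra := intros; lra.
Ltac Nra := intros; nra.
Lemma ReW_bound k M : 0 < M -> exists C1, 0 <= C1 /\ forall u v T X,
  0 <= X < M * M -> 0 <= T -> u = T - X ->
  Rabs v <= X * (8 * INR k.+1) + T / (8 * INR k.+1) ->
  T^(k.+1) / 4 - C1 <= u^(k.+1) - ((Rabs u + Rabs v)^(k.+1) - Rabs u ^(k.+1)).
Proof.
move=> hM. set Nr := INR k.+1.
have hN : 1 <= Nr by rewrite /Nr S_INR; have := pos_INR k; Lra.
have h0 : 0 <= Nr * Nr * (M * M) by Nra.
set R0 := 64 * (Nr * Nr) * (M * M) + 1.
have hR0 : 1 <= R0 by rewrite /R0; Nra.
set C0 := (2 * R0 + M * M + 8 * Nr * (M * M))^(k.+1).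
have hC0 : 0 <= C0 by apply: pow_le; Nra.
have hR0N := pow_le R0 k.+1 ltac:(Lra).
exists (C0 + R0^(k.+1) / 4). split; first Lra.
move=> u v T X hX hT hu hv.
have hTN := pow_le T k.+1 hT.
have habs : Rabs (u ^ k.+1) = Rabs u ^ k.+1 by rewrite RPow_abs.
have hua := Rabs_pos u. have hva := Rabs_pos v.
have hpN := pow_le (Rabs u + Rabs v) k.+1 ltac:(Lra).
case: (Rle_lt_dec R0 T) => hTR.
-
  have hT0 : 0 < T by Lra.
  have hX8' : 64 * (Nr * Nr) * X <= 64 * (Nr * Nr) * (M * M) by apply: Rmult_le_compat_l; Nra.
  have hX8 : 64 * (Nr * Nr) * X <= T by rewrite /R0 in hTR; Lra.
  have hNX : 0 <= Nr * X by Nra.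
  have hXX : Nr * X <= Nr * X * (8 * Nr) by Nra.
  have hXT : Nr * X <= T / 8 by Nra.
  have hu0 : 0 <= u by rewrite hu; Nra.
  rewrite (Rabs_right u); last Lra.
  have B := bern k T X ltac:(split; [Lra | Nra]).
  rewrite -hu in B.
  have hTk : 0 <= T^k := pow_le T k hT.
  have hTk1 : T^(k.+1) = T * T^k by [].
  have h78 : T - Nr * X >= 7/8 * T by Lra.
  have L : 7/8 * T^(k.+1) <= u^(k.+1).
    apply: Rle_trans B. rewrite hTk1 -/Nr. Nra.
  have hv2 : X * (8 * Nr) <= T / (8 * Nr).
    apply: (Rmult_le_reg_r (8 * Nr)); first Lra.
    have -> : T / (8 * Nr) * (8 * Nr) = T by field; Lra.
    Nra.
  set g := T / (4 * Nr).
  have hg : 0 <= g by rewrite /g; apply: Rmult_le_pos; [Lra | apply: Rlt_le; apply: Rinv_0_lt_compat; Lra].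
  have e : T / (8 * Nr) + T / (8 * Nr) = g by rewrite /g; field; Lra.
  have hX1 : X <= X * (8 * Nr) by Nra.
  have hvg : Rabs v <= X + g by Lra.
  have U := pow_upper k T g hT0 hg ltac:(rewrite /g -/Nr; apply: Req_le; field; Lra).
  have hp : u + Rabs v <= T + g by Lra.
  have U2 := pow_incr (u + Rabs v) (T + g) k.+1 ltac:(Lra).
  Lra.
-
  have hu1 : Rabs u <= T + X.
    rewrite hu; apply: Rle_trans (Rabs_triang _ _) _; rewrite Rabs_Ropp !Rabs_right; Lra.
  have h1 : X * (8 * Nr) <= 8 * Nr * (M * M) by Nra.
  have h2 : T / (8 * Nr) <= T.
    apply: (Rmult_le_reg_r (8 * Nr)); first Lra.
    have -> : T / (8 * Nr) * (8 * Nr) = T by field; Lra. Nra.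
  have hp : Rabs u + Rabs v <= 2 * R0 + M * M + 8 * Nr * (M * M) by Lra.
  have hpC := pow_incr (Rabs u + Rabs v) _ k.+1 (conj (Rplus_le_le_0_compat _ _ hua hva) hp).
  rewrite -/C0 in hpC.
  have hTR0 := pow_incr T R0 k.+1 ltac:(Lra).
  have hm : - Rabs u ^ k.+1 <= u ^ k.+1.
    rewrite -habs. have := Rle_abs (- u ^ k.+1). rewrite Rabs_Ropp; Lra.
  Lra.
Qed.

Lemma exp_mono x y : x <= y -> exp x <= exp y.
Proof. case/Rle_lt_or_eq_dec => h; [apply: Rlt_le; exact: exp_increasing | rewrite h; lra]. Qed.

Lemma rpow_bound e : 0 <= e -> exists m : nat, forall t, 0 <= t -> rpow t e <= 1 + t^m.
Proof.
move=> he. have [h1 _] := archimed e.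
have hz : (0 <= up e)%Z by apply: Z.lt_le_incl; apply: lt_IZR; lra.
exists (Z.to_nat (up e)) => t ht.
have hm : e <= INR (Z.to_nat (up e)) by rewrite INR_IZR_INZ Z2Nat.id //; lra.
have hp := pow_le t (Z.to_nat (up e)) ht.
rewrite /rpow. case: (Req_EM_T t 0) => [ht0|ht0] /=; first by case: (Req_EM_T e 0) => _ /=; lra.
have htp : 0 < t by lra.
case: (Rle_lt_dec t 1) => h.
  have hl : ln t <= 0.
    case: (Req_dec t 1) => [->|h']; first by rewrite ln_1; lra.
    rewrite -ln_1; apply: Rlt_le; apply: ln_increasing; lra.
  rewrite /Rpower. have : exp (e * ln t) <= exp 0 by apply: exp_mono; nra.
  rewrite exp_0. lra.
have := Rle_Rpower t e _ ltac:(lra) hm. rewrite Rpower_pow //. lra.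
Qed.

Lemma poly_bound n (f : CVec n -> CC) : poly_fun f ->
  exists A d, 0 < A /\ forall z, Cnorm (f z) <= A * (1 + vnorm z)^d.
Proof.
elim => [c|i|p q _ [A1 [d1 [h1 H1]]] _ [A2 [d2 [h2 H2]]]|p q _ [A1 [d1 [h1 H1]]] _ [A2 [d2 [h2 H2]]]].
- exists (Cnorm c + 1), 0%nat; split; first by have := Cnorm_ge0 c; lra.
  move=> z /=; lra.
- exists 1, 1%nat; split; first lra. move=> z /=. have := coord_le _ z i. have := vnorm_ge0 _ z. lra.
- exists (A1 + A2), (d1 + d2)%nat; split; first lra. move=> z.
  have hv := vnorm_ge0 _ z.
  have e1 : (1 + vnorm z)^d1 <= (1 + vnorm z)^(d1 + d2) by apply: Rle_pow; [lra | apply: Nat.le_add_r].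
  have e2 : (1 + vnorm z)^d2 <= (1 + vnorm z)^(d1 + d2) by apply: Rle_pow; [lra | apply: Nat.le_add_l].
  apply: Rle_trans (Cnorm_add _ _) _.
  have := H1 z. have := H2 z. nra.
- exists (A1 * A2), (d1 + d2)%nat; split; first nra. move=> z.
  rewrite Cnorm_mul pow_add.
  have := H1 z. have := H2 z. have := Cnorm_ge0 (p z). have := Cnorm_ge0 (q z). 
  move=> a b c d'. have := Rmult_le_compat _ _ _ _ b a d' c. nra.
Qed.

Lemma holo_ext n (f g : CVec n -> CC) : (forall z, f z = g z) -> holomorphic f -> holomorphic g.
Proof.
move=> e H z; have [a Ha] := H z; exists a => eps he.
have [d [hd Hd]] := Ha eps he; exists d; split => // h hh; rewrite -!e; exact: Hd.
Qed.
Lemma holo_sum n (F : 'I_n -> CVec n -> CC) : (forall i, holomorphic (F i)) ->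
  holomorphic (fun z => \big[Cadd/C0]_(i<n) F i z).
Proof.
move=> HF.
suff H : forall r : list 'I_n, holomorphic (fun z => \big[Cadd/C0]_(i <- r) F i z).
  exact: (H (index_enum _)).
elim => [|i r IH].
  apply: holo_ext (holo_const n C0) => z; by rewrite big_nil.
apply: holo_ext (holo_add _ _ _ (HF i) IH) => z; by rewrite big_cons.
Qed.

Fixpoint Cpow (w : CC) (k : nat) : CC := match k with O => C1 | S k => Cmul w (Cpow w k) end.
Lemma holo_pow n (f : CVec n -> CC) k : holomorphic f -> holomorphic (fun z => Cpow (f z) k).
Proof.
move=> H; elim: k => [|k IH]; first exact: holo_const.
exact: (holo_mul _ _ _ H IH).
Qed.
Lemma Cnorm_C1 : Cnorm C1 = 1.
Proof. rewrite /Cnorm /= (_ : 1 * 1 + 0 * 0 = 1); [exact: sqrt_1 | ring]. Qed.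
Lemma Cnorm_pow w k : Cnorm (Cpow w k) = Cnorm w ^ k.
Proof. elim: k => [|k IH] /=; [exact: Cnorm_C1 | by rewrite Cnorm_mul IH]. Qed.
Lemma Cpow_diff a b k :
  Cnorm (Csub (Cpow (Cadd a b) k) (Cpow a k)) <= (Cnorm a + Cnorm b)^k - Cnorm a ^ k.
Proof.
elim: k => [|k IH].
  rewrite /= (_ : Csub C1 C1 = C0); last Ceq. rewrite Cnorm0; lra.
rewrite [Cpow _ k.+1]/= [Cpow a k.+1]/=.
rewrite (_ : Csub (Cmul (Cadd a b) (Cpow (Cadd a b) k)) (Cmul a (Cpow a k)) =
  Cadd (Cmul (Cadd a b) (Csub (Cpow (Cadd a b) k) (Cpow a k))) (Cmul b (Cpow a k))); last Ceq.
apply: Rle_trans (Cnorm_add _ _) _. rewrite !Cnorm_mul Cnorm_pow.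
have := Cnorm_add a b. have := Cnorm_ge0 a. have := Cnorm_ge0 b.
have := Cnorm_ge0 (Csub (Cpow (Cadd a b) k) (Cpow a k)). have := Cnorm_ge0 (Cadd a b).
have := pow_le (Cnorm a) k (Cnorm_ge0 a).
move=> p0 p1 p2 p3 p4 p5.
rewrite [(_ + _)^k.+1]/= [Cnorm a ^ k.+1]/=.
have := Rmult_le_compat _ _ _ _ p1 p2 p5 IH. nra.
Qed.
Lemma Cpow_real u k : Cpow (mkC u 0) k = mkC (u^k) 0.
Proof. elim: k => [|k IH] /=; first by []. rewrite IH; Ceq. Qed.
Lemma Cnorm_real u : Cnorm (mkC u 0) = Rabs u.
Proof. rewrite /Cnorm /= -sqrt_Rsqr_abs /Rsqr; f_equal; ring. Qed.
Lemma Cnorm_imag v : Cnorm (mkC 0 v) = Rabs v.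
Proof. rewrite /Cnorm /= -sqrt_Rsqr_abs /Rsqr; f_equal; ring. Qed.
Lemma Re_pow_low u v k :
  u^k - ((Rabs u + Rabs v)^k - Rabs u ^ k) <= Cre (Cpow (Cadd (mkC u 0) (mkC 0 v)) k).
Proof.
have D := Cpow_diff (mkC u 0) (mkC 0 v) k. rewrite Cnorm_real Cnorm_imag in D.
set x := Cpow (Cadd (mkC u 0) (mkC 0 v)) k in D *.
have := Cre_le (Csub x (Cpow (mkC u 0) k)). rewrite Cpow_real /=.
rewrite Cpow_real in D. move=> h. have h2 := Rle_abs (- (Cre x + - u^k)). rewrite Rabs_Ropp in h2. lra.
Qed.

Lemma two_pq c p q : 0 < c -> 2 * Rabs (p * q) <= c * (p * p) + q * q / c.
Proof.
move=> hc. rewrite Rabs_mult.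
have ep : p * p = Rabs p * Rabs p by rewrite -Rabs_mult Rabs_right; nra.
have eq : q * q = Rabs q * Rabs q by rewrite -Rabs_mult Rabs_right; nra.
rewrite ep eq. set a := Rabs p. set b := Rabs q.
have e : c * (a * a) + b * b / c - 2 * (a * b) = (c * a - b) * (c * a - b) / c by field; lra.
have : 0 <= (c * a - b) * (c * a - b) / c.
  apply: Rmult_le_pos; [exact: (Rle_0_sqr (c * a - b)) | apply: Rlt_le; apply: Rinv_0_lt_compat; lra].
lra.
Qed.

Section Wsec.
Variable n : nat.
Definition Wf (z : CVec n) := \big[Cadd/C0]_(i<n) Cmul (mkC (-1) 0) (Cmul (z i) (z i)).
Definition Xs (z : CVec n) := \big[Rplus/0]_(i<n) (Cre (z i) * Cre (z i)).
Definition Ts (z : CVec n) := \big[Rplus/0]_(i<n) (Cim (z i) * Cim (z i)).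

Lemma holo_W : holomorphic Wf.
Proof.
apply: holo_sum => i. apply: holo_mul; first exact: holo_const.
apply: holo_mul; exact: holo_coord.
Qed.
Lemma Xs_ge0 z : 0 <= Xs z. Proof. apply: sumR_ge0 => i; nra. Qed.
Lemma Ts_ge0 z : 0 <= Ts z. Proof. apply: sumR_ge0 => i; nra. Qed.
Lemma Re_W z : Cre (Wf z) = Ts z - Xs z.
Proof.
rewrite /Wf Cre_sum.
rewrite (eq_bigr (fun i => Cim (z i) * Cim (z i) + (-1) * (Cre (z i) * Cre (z i)))); last first.
  move=> i _ /=; ring.
rewrite sumR_add sumR_scal /Ts /Xs; ring.
Qed.
Lemma Im_W z c : 0 < c -> Rabs (Cim (Wf z)) <= Xs z * c + Ts z / c.
Proof.
move=> hc. rewrite /Wf Cim_sum. apply: Rle_trans (sumR_abs _ _) _.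
apply: Rle_trans (sumR_le _ _ (fun i => c * (Cre (z i) * Cre (z i)) + / c * (Cim (z i) * Cim (z i))) _) _.
  move=> i /=.
  rewrite (_ : -1 * (Cre (z i) * Cim (z i) + Cim (z i) * Cre (z i)) + 0 * (Cre (z i) * Cre (z i) - Cim (z i) * Cim (z i)) = - (2 * (Cre (z i) * Cim (z i)))); last ring.
  rewrite Rabs_Ropp Rabs_mult (Rabs_right 2); last lra.
  have := two_pq c (Cre (z i)) (Cim (z i)) hc. rewrite /Rdiv. nra.
rewrite sumR_add !sumR_scal /Xs /Ts /Rdiv. apply: Req_le; ring.
Qed.
Lemma vnorm_XT z : vnorm z = sqrt (Xs z + Ts z).
Proof.
rewrite /vnorm /Xs /Ts -sumR_add. f_equal. apply: eq_bigr => i _. exact: Cnorm_sq.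
Qed.
Lemma renorm_X z : renorm z = sqrt (Xs z). Proof. by []. Qed.
End Wsec.

Theorem mainTheorem5 (n : nat) (lambda : CVec n -> CC) (Hlambda : poly_fun lambda)
  (Psi : CC -> CC) (HPsi : entire Psi) (Hord : finite_order Psi) :
  exists nu : CVec n -> CC,
    holomorphic nu /\ moderate_vertical_growth nu /\
    (forall z : CVec n, nu z = C0 <-> Psi (lambda z) = C0).
Proof.
move: Hord => [e [he [Ce [hCe HPb]]]].
have [A [d [hA Hlam]]] := poly_bound _ _ Hlambda.
have [m Hm] := rpow_bound e (Rge_le _ _ he).
set D := (d * m)%nat.
set Am := A ^ m. have hAm : 0 < Am by apply: pow_lt.
set Q : R := 2 ^ D. have hQ : 0 < Q by apply: pow_lt; lra.
set K := 4 * (Am * Q).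
set G := fun z : CVec n => Cmul (mkC (-K) 0) (Cpow (Wf n z) D.+1).
exists (fun z => Cmul (Psi (lambda z)) (Cexp (G z))).
split; [|split].
- apply: holo_mul.
    exact: (holo_comp _ _ _ HPsi (poly_holo _ _ Hlambda)).
  apply: (holo_comp _ _ _ Cexp_entire).
  apply: holo_mul; first exact: holo_const.
  apply: holo_pow; exact: (holo_W n).
- move=> M hM. have [C1 [hC1 HW]] := ReW_bound D M hM.
  exists 0, (Ce * exp (1 + Am * Q * ((2 + M)^D + 1) + K * C1)).
  move=> z hz.
  have hv := vnorm_ge0 _ z.
  rewrite Rpower_O; last lra. rewrite Rmult_1_r Cnorm_mul Cnorm_Cexp.
  set X := Xs n z. set T := Ts n z. set s := vnorm z.
  have hX0 : 0 <= X := Xs_ge0 n z. have hT : 0 <= T := Ts_ge0 n z.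
  have hXM : X < M * M.
    rewrite renorm_X -/X in hz. have := sqrt_sqrt X hX0. have := sqrt_pos X. nra.
  have eG : Cre (G z) = - K * Cre (Cpow (Wf n z) D.+1) by rewrite /G /=; ring.
  have eW : Wf n z = Cadd (mkC (Cre (Wf n z)) 0) (mkC 0 (Cim (Wf n z))) by Ceq.
  have hNr : 0 < 8 * INR D.+1 by have := pos_INR D; rewrite S_INR; lra.
  have ReL : T^(D.+1) / 4 - C1 <= Cre (Cpow (Wf n z) D.+1).
    apply: Rle_trans (HW (Cre (Wf n z)) (Cim (Wf n z)) T X (conj hX0 hXM) hT (Re_W n z) (Im_W n z _ hNr)) _.
    move: (Re_pow_low (Cre (Wf n z)) (Cim (Wf n z)) D.+1). by rewrite -eW.
  have hl := Cnorm_ge0 (lambda z).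
  have P1 := HPb (lambda z).
  have P2 : rpow (Cnorm (lambda z)) e <= 1 + Am * (1 + s)^D.
    apply: Rle_trans (Hm _ hl) _.
    have := pow_incr _ _ m (conj hl (Hlam z)).
    rewrite Rpow_mult_distr -pow_mult -/Am -/D -/s => H. apply: Rplus_le_compat_l; exact: H.
  have hs1 : 1 + s <= 2 + M + T.
    rewrite /s vnorm_XT -/X -/T.
    have hsq : sqrt (X + T) <= 1 + M + T.
      rewrite -(sqrt_square (1 + M + T)); last lra.
      apply: sqrt_le_1_alt. nra.
    lra.
  have P3 : (1 + s)^D <= Q * ((2 + M)^D + 1 + T^(D.+1)).
    have hs0 : 0 <= 1 + s by rewrite /s; lra.
    apply: Rle_trans (pow_incr (1 + s) (2 + M + T) D (conj hs0 hs1)) _.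
    apply: Rle_trans (pow_sum_le (2 + M) T D ltac:(lra) hT) _.
    have := pow_le_succ T D hT. rewrite -/Q. nra.
  have hexp := exp_pos (rpow (Cnorm (lambda z)) e).
  have E1 : Cnorm (Psi (lambda z)) <= Ce * exp (1 + Am * (1 + s)^D).
    apply: Rlt_le; apply: Rlt_le_trans P1 _.
    apply: Rmult_le_compat_l; [lra | exact: exp_mono].
  have hE := exp_pos (Cre (G z)).
  apply: Rle_trans (Rmult_le_compat_r _ _ _ (Rlt_le _ _ hE) E1) _.
  rewrite Rmult_assoc -exp_plus. apply: Rmult_le_compat_l; first lra.
  apply: exp_mono. rewrite eG.
  have h1 : Am * (1 + s)^D <= Am * (Q * ((2 + M)^D + 1 + T^(D.+1))) by apply: Rmult_le_compat_l; lra.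
  have h2 : K * (T^(D.+1) / 4 - C1) <= K * Cre (Cpow (Wf n z) D.+1) by apply: Rmult_le_compat_l; rewrite /K; nra.
  rewrite /K in h2 *. nra.
- move=> z; split.
    move=> H. have := f_equal Cnorm H. rewrite Cnorm_mul Cnorm_Cexp Cnorm0 => h0.
    have hE := exp_pos (Cre (G z)).
    apply: Cnorm_eq0. case: (Rmult_integral _ _ h0) => // h; lra.
  move=> ->. Ceq.
Qed.
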